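(* Let $n,r$ be positive integers with $2\leq r\leq n$. Then (a) $(\mathfrak{H}_{n,k}^{r}, \mathfrak{M}_{n,k}^{r})$ is a maximal and stable cross-intersecting pair in $\mathcal{I}_{n,k}^{r}$; and (b) if $r \leq n-1$, then $\mathcal{H}_{n,k}^r$ is a maximal and stable intersecting family in $\mathcal{I}_{n,k}^{r}$.
   Context: $\Gamma_{n,k}$ is the disjoint union of $n$ copies of $K_k$, with vertices $(i,j)$, $i\in[n]$, $j\in[k]$; $\mathcal{I}_{n,k}^r$ is the set of its independent sets of size $r$. $\mathfrak{H}_{n,k}^{r}=\{[r]\times\{1\}\}$, $\mathfrak{M}_{n,k}^{r}=\{X\in\mathcal{I}_{n,k}^r : X\cap([r]\times\{1\})\neq\emptyset\}$. For $r\le n-1$, with $H=[2,r+1]\times\{1\}$, $\mathcal{H}_{n,k}^r = \{ F \in \mathcal{I}_{n,k}^r : (1,1)\in F,\ F \cap H \neq \emptyset \} \cup \{H\}$. A pair of non-empty families is cross-intersecting if each member of the first meets each member of the second; it is maximal if not contained componentwise in a different cross-intersecting pair in $\mathcal{I}_{n,k}^r$. An intersecting family is maximal if it is not properly contained in an intersecting family in $\mathcal{I}_{n,k}^r$. For $i\in[n],s\in[2,k]$: $P_{i,s}(X)=(X\setminus\{(i,s)\})\cup\{(i,1)\}$ if $(i,s)\in X$, else $X$; $\pi_{i,s}(\mathcal{F})=\{P_{i,s}(X):X\in\mathcal{F}\}\cup\{X\in\mathcal{F}:P_{i,s}(X)\in\mathcal{F}\}$; a family is stable if $\pi_{i,s}(\mathcal{F})=\mathcal{F}$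 for all $i\in[n],s\in[2,k]$, and a pair is stable if both families are. *)

(* Defs.v *)
From mathcomp Require Import all_boot.
Set Implicit Arguments. Unset Strict Implicit. Unset Printing Implicit Defensive.

(* Conventions: vertex (i,j) of the paper, i in [n], j in [k], is encoded
   0-based as the pair (i-1, j-1) : 'I_n * 'I_k.  So the paper's column 1
   is column 0 here, (1,1) is (0,0), [r] x {1} = {(i,0) | i < r}, and
   s in [2,k] corresponds to s : 'I_k with 0 < s. *)

Definition vert (n k : nat) := ('I_n * 'I_k)%type.

(* Independent sets of Gamma_{n,k} (n disjoint copies of K_k):
   at most one vertex in each copy. *)
Definition indep n k (X : {set vert n k}) : bool :=
  [forall x in X, forall y in X, (x.1 == y.1) ==> (x == y)].

Definition Ifam n k r : {set {set vert n k}} :=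
  [set X | indep X && (#|X| == r)].

Definition firstr n k r : {set vert n k} :=
  [set x : vert n k | (x.1 < r) && (val x.2 == 0)].
Definition frakH n k r : {set {set vert n k}} := [set firstr n k r].

Definition frakM n k r : {set {set vert n k}} :=
  [set X in Ifam n k r | X :&: firstr n k r != set0].

Definition Hset n k r : {set vert n k} :=
  [set x : vert n k | (0 < x.1 <= r) && (val x.2 == 0)].
Definition calH n k r : {set {set vert n k}} :=
  [set F in Ifam n k r |
     [exists x in F, (val x.1 == 0) && (val x.2 == 0)]
     && (F :&: Hset n k r != set0)] :|: [set Hset n k r].

(* column "1" of the paper, built from any s : 'I_k (which witnesses 0 < k) *)
Definition col1 k (s : 'I_k) : 'I_k :=
  Ordinal (leq_ltn_trans (leq0n s) (ltn_ord s)).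

Definition Pshift n k (i : 'I_n) (s : 'I_k) (X : {set vert n k}) : {set vert n k} :=
  if (i, s) \in X then (X :\ (i, s)) :|: [set (i, col1 s)] else X.

Definition pishift n k (i : 'I_n) (s : 'I_k) (F : {set {set vert n k}})
  : {set {set vert n k}} :=
  [set Pshift i s X | X in F] :|: [set X in F | Pshift i s X \in F].

Definition stable n k (F : {set {set vert n k}}) : Prop :=
  forall (i : 'I_n) (s : 'I_k), 0 < val s -> pishift i s F = F.

Definition stable_pair n k (F G : {set {set vert n k}}) : Prop :=
  stable F /\ stable G.

Definition cross_intersecting n k (F G : {set {set vert n k}}) : Prop :=
  F != set0 /\ G != set0 /\
  forall A B, A \in F -> B \in G -> A :&: B != set0.

Definition maximal_cross_pair n k r (F G : {set {set vert n k}}) : Prop :=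
  [/\ F \subset Ifam n k r, G \subset Ifam n k r, cross_intersecting F G &
    forall F' G' : {set {set vert n k}},
      F' \subset Ifam n k r -> G' \subset Ifam n k r ->
      F \subset F' -> G \subset G' -> cross_intersecting F' G' ->
      F' = F /\ G' = G].

Definition intersecting n k (F : {set {set vert n k}}) : Prop :=
  forall A B, A \in F -> B \in F -> A :&: B != set0.

Definition maximal_intersecting n k r (F : {set {set vert n k}}) : Prop :=
  [/\ F \subset Ifam n k r, intersecting F &
    forall F' : {set {set vert n k}},
      F' \subset Ifam n k r -> F \subset F' -> intersecting F' -> F' = F].

(* Main.v *)
Require Import Defs.
From mathcomp Require Import all_boot.
Set Implicit Arguments. Unset Strict Implicit. Unset Printing Implicit Defensive.

Section S.
Variables (n k : nat).
Implicit Types (X A B C : {set vert n k}).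

Lemma indepP X : reflect (forall x y, x \in X -> y \in X -> x.1 = y.1 -> x = y) (indep X).
Proof.
apply: (iffP forallP) => [H x y xX yX e|H x].
  by move: (H x); rewrite xX /= => /forallP/(_ y); rewrite yX e eqxx /= => /eqP.
apply/implyP=> xX; apply/forallP=> y; apply/implyP=> yX; apply/implyP=> /eqP e.
by rewrite (H x y xX yX e).
Qed.

Lemma stableP (F : {set {set vert n k}}) :
  (forall (i : 'I_n) (s : 'I_k), 0 < val s -> forall X, X \in F -> Pshift i s X \in F) ->
  stable F.
Proof.
move=> H i s s0; apply/eqP; rewrite eqEsubset; apply/andP; split.
  apply/subsetP=> X; rewrite /pishift inE => /orP[/imsetP[Y YF ->]|]; first exact: H.
  by rewrite inE => /andP[].
by apply/subsetP=> X XF; rewrite /pishift inE; apply/orP; right; rewrite inE XF H.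
Qed.

Lemma Pshift_keep (i : 'I_n) (s : 'I_k) X y : 0 < val s -> y \in X -> val y.2 = 0 ->
  y \in Pshift i s X.
Proof.
move=> s0 yX y0; rewrite /Pshift; case: ifP => // _.
rewrite !inE yX andbT; apply/orP; left; apply/negP => /eqP e.
have h : nat_of_ord s = 0 by rewrite -y0 e.
by move: s0; change (val s) with (nat_of_ord s); rewrite h.
Qed.

Lemma Pshift_Ifam r (i : 'I_n) (s : 'I_k) X : 0 < val s -> X \in Ifam n k r ->
  Pshift i s X \in Ifam n k r.
Proof.
move=> s0; have {s0} s0 : 0 < nat_of_ord s := s0.
rewrite /Pshift; case: ifP => // isX.
rewrite !inE => /andP[/indepP iX /eqP cX].
have nX : (i, col1 s) \notin X.
  apply/negP => h; have := iX _ _ h isX erefl; case=> /(congr1 val) /= e.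
  by rewrite -e in s0.
apply/andP; split.
  apply/indepP => x y; rewrite !inE => /orP[/andP[xn xX]|/eqP ->] /orP[/andP[yn yX]|/eqP ->] //=.
  - exact: iX.
  - move=> e; have := iX _ _ xX isX e; by move/eqP: xn.
  - move=> e; have := iX _ _ yX isX (esym e); by move/eqP: yn.
rewrite setUC cardsU1 !inE negb_and nX orbT /=.
by rewrite (cardsD1 (i, s) X) isX in cX; rewrite -cX.
Qed.

Lemma extend (A : {set vert n k}) m : 1 < k -> indep A -> forall C,
  indep C -> A :&: C = set0 -> #|C| + m <= n ->
  exists B, [/\ indep B, C \subset B, #|B| = #|C| + m & A :&: B = set0].
Proof.
move=> k1 /indepP iA; elim: m => [|m IH] C iC dAC cC.
  by exists C; rewrite addn0 subxx.
have cn : #|C| < n by rewrite -addSnnS in cC; exact: leq_trans (leq_addr _ _) cC.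
have [j jn] : exists j : 'I_n, j \notin [set x.1 | x in C].
  apply/existsP; rewrite -negb_forall; apply/negP => /forallP H.
  have : #|[set: 'I_n]| <= #|C|.
    apply: leq_trans (leq_imset_card (fun x : vert n k => x.1) C).
    by apply: subset_leq_card; apply/subsetP => j _; exact: H.
  by rewrite cardsT card_ord leqNgt cn.
pose c0 : 'I_k := Ordinal (ltnW k1).
pose c1 : 'I_k := Ordinal k1.
pose v : vert n k := if (j, c0) \in A then (j, c1) else (j, c0).
have vA : v \notin A.
  rewrite /v; case: ifP => [h|->] //; apply/negP => h'.
  by have := iA _ _ h h' erefl; case.
have vC : v \notin C.
  apply/negP => h; move: jn; have -> : j = v.1 by rewrite /v; case: ifP.
  by rewrite imset_f.
have iC' : indep (v |: C).
  apply/indepP => x y; rewrite !inE => /orP[/eqP ->|xC] /orP[/eqP ->|yC] //.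
  + move=> e; move: jn; rewrite (_ : j = y.1); first by rewrite imset_f.
    by rewrite -e /v; case: ifP.
  + move=> e; move: jn; rewrite (_ : j = x.1); first by rewrite imset_f.
    by rewrite e /v; case: ifP.
  + by move/indepP: iC; apply.
have dAC' : A :&: (v |: C) = set0.
  by rewrite setIUr dAC setU0; apply/setP => x; rewrite !inE; apply/negP=> /andP[xA /eqP xv]; move: vA; rewrite -xv xA.
have cC' : #|v |: C| + m <= n by rewrite cardsU1 vC add1n addSnnS.
have [B [iB sB cB dB]] := IH (v |: C) iC' dAC' cC'.
exists B; split => //.
- by apply: subset_trans sB; apply: subsetUr.
- by rewrite cB cardsU1 vC add1n addSnnS.
Qed.

Lemma col0_eq (x y : vert n k) : x.1 = y.1 -> val x.2 = 0 -> val y.2 = 0 -> x = y.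
Proof.
case: x y => [a b] [c d] /= -> b0 d0; congr pair; apply: val_inj; by rewrite /= b0 d0.
Qed.

Lemma firstr_Ifam r : 0 < k -> r <= n -> firstr n k r \in Ifam n k r.
Proof.
move=> k0 rn; pose z : 'I_k := Ordinal k0.
rewrite inE; apply/andP; split.
  apply/indepP => x y; rewrite !inE => /andP[_ /eqP x0] /andP[_ /eqP y0] e.
  exact: col0_eq.
have -> : firstr n k r = [set (widen_ord rn i, z) | i : 'I_r].
  apply/setP => [[a b]]; rewrite !inE /=; apply/andP/imsetP => [[ar /eqP b0]|[i _ [-> ->]]].
    by exists (Ordinal ar) => //; apply: col0_eq => //=; apply: val_inj.
  by split; rewrite /= ?ltn_ord.
apply/eqP; rewrite card_imset ?card_ord // => i j [] e; exact: val_inj.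
Qed.

Lemma Hset_Ifam r : 0 < k -> r < n -> Hset n k r \in Ifam n k r.
Proof.
move=> k0 rn; pose z : 'I_k := Ordinal k0.
pose g (i : 'I_r) : 'I_n := Ordinal (leq_ltn_trans (ltn_ord i) rn).
rewrite inE; apply/andP; split.
  apply/indepP => x y; rewrite !inE => /andP[_ /eqP x0] /andP[_ /eqP y0] e.
  exact: col0_eq.
have -> : Hset n k r = [set (g i, z) | i : 'I_r].
  apply/setP => [[a b]]; rewrite !inE /=; apply/andP/imsetP => [[/andP[a0 ar] /eqP b0]|[i _ [-> ->]]].
    have ar' : a.-1 < r by rewrite prednK.
    by exists (Ordinal ar') => //; apply: col0_eq => //=; apply: val_inj; rewrite /= prednK.
  by split; rewrite /= ?ltn_ord.
apply/eqP; rewrite card_imset ?card_ord // => i j [] e; apply: val_inj; exact: e.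
Qed.

Lemma partA r : 2 <= k -> 2 <= r -> r <= n ->
  maximal_cross_pair r (frakH n k r) (frakM n k r) /\ stable_pair (frakH n k r) (frakM n k r).
Proof.
move=> k2 r2 rn; have k0 : 0 < k by apply: leq_trans k2.
have r0 : 0 < r by apply: leq_trans r2.
have n0 : 0 < n by apply: leq_trans rn.
pose z : 'I_k := Ordinal k0.
pose o : vert n k := (Ordinal n0, z).
have oF : o \in firstr n k r by rewrite inE /= r0.
have FI := firstr_Ifam k0 rn.
have cF : #|firstr n k r| = r by move: FI; rewrite inE => /andP[_ /eqP].
have FM : firstr n k r \in frakM n k r.
  by rewrite inE FI setIid; apply/set0Pn; exists o.
have HI : frakH n k r \subset Ifam n k r by rewrite sub1set.
have MI : frakM n k r \subset Ifam n k r by apply/subsetP => X; rewrite inE => /andP[].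
have cross : cross_intersecting (frakH n k r) (frakM n k r).
  split; first by apply/set0Pn; exists (firstr n k r); rewrite inE.
  split; first by apply/set0Pn; exists (firstr n k r).
  by move=> A B; rewrite inE => /eqP ->; rewrite inE => /andP[_]; rewrite setIC.
split; last split.
- split => // F' G' F'I G'I HF' MG' [_ [_ cr]].
  have fF' : firstr n k r \in F' by apply: (subsetP HF'); rewrite inE.
  have GM : G' = frakM n k r.
    apply/eqP; rewrite eqEsubset MG' andbT; apply/subsetP => B BG.
    by rewrite inE (subsetP G'I _ BG) /= setIC; apply: cr.
  split => //; apply/eqP; rewrite eqEsubset HF' andbT; apply/subsetP => A AF.
  rewrite inE; have := subsetP F'I _ AF; rewrite inE => /andP[iA /eqP cA].
  rewrite eq_sym eqEcard cF cA leqnn andbT; apply/negPn/negP => /subsetPn [x xf xA].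
  have iC : indep [set x] by apply/indepP => u v; rewrite !inE => /eqP -> /eqP ->.
  have dC : A :&: [set x] = set0.
    by apply/setP => u; rewrite !inE; apply/negP => /andP[uA /eqP ux]; move: xA; rewrite -ux uA.
  have cC : #|[set x]| + r.-1 <= n by rewrite cards1 add1n prednK.
  have [B [iB sB cB dB]] := extend k2 iA iC dC cC.
  have BG : B \in G'.
    rewrite GM inE inE iB cB cards1 add1n prednK //= eqxx /=.
    apply/set0Pn; exists x; rewrite inE xf andbT; apply: (subsetP sB); exact: set11.
  by have := cr _ _ AF BG; rewrite dB eqxx.
- apply: stableP => i s s0 X; rewrite inE => /eqP ->; rewrite inE; apply/eqP.
  rewrite /Pshift ifF //; rewrite inE /=; apply/negbTE; rewrite negb_and.
  by apply/orP; right; rewrite -lt0n.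
- apply: stableP => i s s0 X; rewrite inE => /andP[XI /set0Pn [y]].
  rewrite inE => /andP[yX yf].
  rewrite inE Pshift_Ifam //=; apply/set0Pn; exists y; rewrite inE yf andbT.
  by apply: Pshift_keep => //; move: yf; rewrite inE => /andP[_ /eqP].
Qed.

Lemma partB r : 2 <= k -> 2 <= r -> r <= n - 1 ->
  maximal_intersecting r (calH n k r) /\ stable (calH n k r).
Proof.
move=> k2 r2 rn1; have k0 : 0 < k by apply: leq_trans k2.
have rn : r < n by move: rn1 r2; case: n => [|n'] //=; rewrite subn1 /=; case: r.
have n0 : 0 < n by apply: leq_ltn_trans (leq0n r) rn.
have n1 : 1 < n by apply: ltn_trans r2 rn.
pose z : 'I_k := Ordinal k0.
pose o : vert n k := (Ordinal n0, z).
pose h1 : vert n k := (Ordinal n1, z).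
have hH : h1 \in Hset n k r by rewrite inE /= (leq_trans _ r2).
have HI := Hset_Ifam k0 rn.
have cH : #|Hset n k r| = r by move: HI; rewrite inE => /andP[_ /eqP].
have oH : o \notin Hset n k r by rewrite inE.
have exE F : [exists x in F, (val x.1 == 0) && (val x.2 == 0)] = (o \in F).
  apply/existsP/idP => [[x /and3P[xF /eqP x1 /eqP x2]]|oF]; last by exists o; rewrite oF.
  by have -> : o = x by apply: col0_eq => //=; apply: val_inj.
have calE X : X \in calH n k r =
    ((X \in Ifam n k r) && ((o \in X) && (X :&: Hset n k r != set0))) || (X == Hset n k r).
  by rewrite !inE exE.
have cI : calH n k r \subset Ifam n k r.
  by apply/subsetP => X; rewrite calE => /orP[/andP[]//|/eqP ->].
have Hc : Hset n k r \in calH n k r by rewrite calE eqxx orbT.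
have inter : intersecting (calH n k r).
  move=> A B; rewrite !calE => /orP[/and3P[_ oA dA]|/eqP ->] /orP[/and3P[_ oB dB]|/eqP ->] //.
  - by apply/set0Pn; exists o; rewrite inE oA.
  - by rewrite setIC.
  - by rewrite setIid; apply/set0Pn; exists h1.
split.
  split => // F' F'I cF' iF'; apply/eqP; rewrite eqEsubset cF' andbT.
  apply/subsetP => A AF; have := subsetP F'I _ AF; rewrite inE => /andP[iA /eqP cA].
  have HF' : Hset n k r \in F' by apply: (subsetP cF').
  rewrite calE inE iA cA eqxx /=.
  case oA: (o \in A); first by rewrite /= setIC iF'.
  rewrite /= eq_sym eqEcard cH cA leqnn andbT; apply/negPn/negP => /subsetPn [x xf xA].
  move/negbT: oA => oA.
  have ox : o != x by apply/negP => /eqP ex; move: oH; rewrite ex xf.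
  have iC : indep [set o; x].
    apply/indepP => u v; rewrite !inE => /orP[/eqP ->|/eqP ->] /orP[/eqP ->|/eqP ->] //= e.
    + by move: xf; rewrite inE -e /=.
    + by move: xf; rewrite inE e /=.
  have dC : A :&: [set o; x] = set0.
    apply/setP => u; rewrite !inE; apply/negP => /andP[uA /orP[/eqP uo|/eqP ux]].
      by move: oA; rewrite -uo uA.
    by move: xA; rewrite -ux uA.
  have cC : #|[set o; x]| + (r - 2) <= n by rewrite cards2 ox /= subnKC // ltnW.
  have [B [iB sB cB dB]] := extend k2 iA iC dC cC.
  have BF : B \in F'.
    apply: (subsetP cF'); rewrite calE inE iB cB cards2 ox /= subnKC // eqxx /=.
    rewrite (subsetP sB) ?inE ?eqxx //=.
    apply/orP; left; apply/set0Pn; exists x.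
    by rewrite inE xf (subsetP sB) // !inE eqxx orbT.
  by have := iF' _ _ AF BF; rewrite dB eqxx.
apply: stableP => i s s0 X; rewrite calE => /orP[/and3P[XI oX /set0Pn [y]]|/eqP ->].
  rewrite inE => /andP[yX yf].
  rewrite calE Pshift_Ifam //= Pshift_keep //=; apply/orP; left; apply/set0Pn; exists y.
  rewrite inE yf andbT; apply: Pshift_keep => //.
  by move: yf; rewrite inE => /andP[_ /eqP].
rewrite /Pshift ifF //; rewrite inE /=; apply/negbTE; rewrite negb_and.
by apply/orP; right; rewrite -lt0n.
Qed.
End S.

Theorem corollary4p8 (n k r : nat) :
  2 <= k -> 2 <= r -> r <= n ->
  (maximal_cross_pair r (frakH n k r) (frakM n k r)
   /\ stable_pair (frakH n k r) (frakM n k r))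
  /\ (r <= n - 1 ->
      maximal_intersecting r (calH n k r) /\ stable (calH n k r)).
Proof.
move=> k2 r2 rn; split; first exact: partA.
by move=> rn1; exact: partB.
Qed.
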